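(* Let $(X,\circ,\bullet)$ be a right-hand skew Boolean algebra. Let $B=X/\gamma$, where $\gamma$ is Green's relation $\mathscr R$ of $(X,\circ)$, with the Boolean algebra structure induced by $\circ$, $\bullet$ and $0$, and let $p\colon X\to B$ be the quotient map. For $x\in X$ and $b\le p(x)$ in $B$ put $x|^{p(x)}_b=y\circ x$ for any $y$ with $p(y)=b$. Then $p\colon X\to B$ is a Boolean set, whose order is the natural partial order of $X$ ($x\le y$ iff $x=x\circ y$).
   Context: A right-hand skew Boolean algebra is $(X,\circ,\bullet)$ where $(X,\circ)$, $(X,\bullet)$ are bands such that: (SB1) $x\circ(x\bullet y)=x=(y\bullet x)\circ x$ and $x\bullet(x\circ y)=x=(y\circ x)\bullet x$; (SB2) $x\circ y\circ x=y\circ x$ and $x\bullet y\bullet x=x\bullet y$; (SB3) $x\bullet y=y\bullet x$ iff $x\circ y=y\circ x$; (SB4) there is $0$ with $0\circ x=0=x\circ 0$; (SB5) each $x^{\downarrow}=\{x\circ s\circ x:s\in X\}$ is a Boolean algebra with top element. Known facts: $(X,\circ)$ is a right normal band; the minimum semilattice congruence $\gamma$ (equal to $\mathscr R$ for $\circ$) is the same for $\circ$ and $\bullet$, and $X/\gamma$ is a Boolean algebra under the induced operations. Convention: a ''Boolean algebra'' means a generalized Boolean algebra (relatively complemented distributive lattice with $0$). Presheaf of sets over a meet semilattice $E$: pairwise disjoint sets $X_e$, restriction maps $x\mapsto x|^e_f$ for $e\ge f$ with $|^e_e=\mathrm{id}$ and $(x|^e_f)|^f_g=x|^e_g$; global support: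 all $X_e\ne\emptyset$. Order: $x\le y$ iff $p(x)\le p(y)$ and $x=y|^{p(y)}_{p(x)}$. Compatibility $x\sim y$: $x\wedge y$ exists and $p(x\wedge y)=p(x)\wedge p(y)$. A Boolean set is a presheaf with global support over a Boolean algebra with a least element $0$ in $(X,\le)$, joins of all compatible pairs, and $p(x)=0\Rightarrow x=0$. *)

(* Defs.v *)
(* A "Boolean algebra" = generalized Boolean algebra: a relatively complemented
   distributive lattice with 0.  Operations m (meet), j (join), z (bottom) on
   the elements of T satisfying S (S must be closed under m, j and contain z). *)

Definition le_of {T : Type} (m : T -> T -> T) (a b : T) : Prop := m a b = a.

Definition is_gba {T : Type} (S : T -> Prop) (m j : T -> T -> T) (z : T) : Prop :=
  S z /\
  (forall a b, S a -> S b -> S (m a b) /\ S (j a b)) /\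
  (forall a b c, S a -> S b -> S c -> m a (m b c) = m (m a b) c) /\
  (forall a b c, S a -> S b -> S c -> j a (j b c) = j (j a b) c) /\
  (forall a b, S a -> S b -> m a b = m b a) /\
  (forall a b, S a -> S b -> j a b = j b a) /\
  (forall a b, S a -> S b -> m a (j a b) = a) /\
  (forall a b, S a -> S b -> j a (m a b) = a) /\
  (forall a b c, S a -> S b -> S c -> m a (j b c) = j (m a b) (m a c)) /\
  (forall a, S a -> m z a = z) /\
  (forall a x b, S a -> S x -> S b -> le_of m a x -> le_of m x b ->
     exists y, S y /\ m x y = a /\ j x y = b).

Definition down {X : Type} (circ : X -> X -> X) (x u : X) : Prop :=
  exists s, u = circ (circ x s) x.

Record RightSkewBA (X : Type) (circ bullet : X -> X -> X) (zero : X) : Prop := {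
  circ_assoc : forall x y z, circ x (circ y z) = circ (circ x y) z;
  circ_idem : forall x, circ x x = x;
  bullet_assoc : forall x y z, bullet x (bullet y z) = bullet (bullet x y) z;
  bullet_idem : forall x, bullet x x = x;
  SB1_circ : forall x y, circ x (bullet x y) = x /\ circ (bullet y x) x = x;
  SB1_bullet : forall x y, bullet x (circ x y) = x /\ bullet (circ y x) x = x;
  SB2_circ : forall x y, circ (circ x y) x = circ y x;
  SB2_bullet : forall x y, bullet (bullet x y) x = bullet x y;
  SB3 : forall x y, bullet x y = bullet y x <-> circ x y = circ y x;
  SB4 : forall x, circ zero x = zero /\ circ x zero = zero;
  SB5 : forall x, is_gba (down circ x) circ bullet zero /\
          exists t, down circ x t /\ forall u, down circ x u -> le_of circ u t
}.

(* Green's relation R of the band (X, circ): x X^1 = y X^1 *)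
Definition greenR {X : Type} (circ : X -> X -> X) (x y : X) : Prop :=
  (x = y \/ exists s, x = circ y s) /\ (y = x \/ exists s, y = circ x s).

Definition nat_le {X : Type} (circ : X -> X -> X) (x y : X) : Prop :=
  x = circ x y.

(* Over a meet semilattice E with meet mE (order le_of mE); X_e = fibre of p
   over e (so the X_e are pairwise disjoint); restriction x |^{p x}_f = res x f,
   only meaningful for f <= p x. *)

Definition presheaf {X E : Type} (mE : E -> E -> E) (p : X -> E)
    (res : X -> E -> X) : Prop :=
  (forall x f, le_of mE f (p x) -> p (res x f) = f) /\
  (forall x, res x (p x) = x) /\
  (forall x f g, le_of mE f (p x) -> le_of mE g f -> res (res x f) g = res x g).

Definition global_support {X E : Type} (p : X -> E) : Prop :=
  forall e, exists x, p x = e.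

Definition psh_le {X E : Type} (mE : E -> E -> E) (p : X -> E)
    (res : X -> E -> X) (x y : X) : Prop :=
  le_of mE (p x) (p y) /\ x = res y (p x).

Definition is_glb {X : Type} (R : X -> X -> Prop) (x y m : X) : Prop :=
  R m x /\ R m y /\ forall w, R w x -> R w y -> R w m.

Definition is_lub {X : Type} (R : X -> X -> Prop) (x y u : X) : Prop :=
  R x u /\ R y u /\ forall w, R x w -> R y w -> R u w.

Definition compatible {X E : Type} (mE : E -> E -> E) (p : X -> E)
    (res : X -> E -> X) (x y : X) : Prop :=
  exists m, is_glb (psh_le mE p res) x y m /\ p m = mE (p x) (p y).

Definition BooleanSet {X E : Type} (mE jE : E -> E -> E) (zE : E)
    (p : X -> E) (res : X -> E -> X) : Prop :=
  is_gba (fun _ => True) mE jE zE /\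
  presheaf mE p res /\
  global_support p /\
  (exists z : X,
     (forall x, psh_le mE p res z x) /\
     (forall x, p x = zE -> x = z)) /\
  (forall x y, compatible mE p res x y ->
     exists u, is_lub (psh_le mE p res) x y u).

(* Main.v *)
Require Import Defs.
From Stdlib Require Import Setoid.

Theorem proposition2p6 (X B : Type) (circ bullet : X -> X -> X) (zero : X)
    (mB jB : B -> B -> B) (zB : B) (p : X -> B) (s : B -> X) :
  RightSkewBA X circ bullet zero ->
  (* B = X / gamma with quotient map p, gamma = Green's R of (X, circ) *)
  (forall x y, p x = p y <-> greenR circ x y) ->
  (* induced operations on B *)
  (forall x y, mB (p x) (p y) = p (circ x y)) ->
  (forall x y, jB (p x) (p y) = p (bullet x y)) ->
  zB = p zero ->
  (* s picks some y with p y = b, for every b (p is surjective) *)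
  (forall b, p (s b) = b) ->
  (* x|^{p x}_b := y o x is independent of the choice of y with p y = b *)
  (forall x y y', le_of mB (p y) (p x) -> p y = p y' -> circ y x = circ y' x) /\
  (* p : X -> B with these restrictions is a Boolean set *)
  BooleanSet mB jB zB p (fun x b => circ (s b) x) /\
  (* its order is the natural partial order of X *)
  (forall x y, psh_le mB p (fun x b => circ (s b) x) x y <-> nat_le circ x y).
Proof.
  intros H Hp HmB HjB Hz Hs.
  destruct H as [assoc idem bassoc bidem sb1c sb1b sb2c sb2b sb3 sb4 sb5].
  assert (RN : forall a b x, circ a (circ b x) = circ b (circ a x)).
  { intros a b x. destruct (sb5 x) as [G _].
    destruct G as (_ & _ & _ & _ & Gc & _).
    assert (E := Gc (circ a x) (circ b x) (ex_intro _ a (eq_sym (sb2c x a)))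
                   (ex_intro _ b (eq_sym (sb2c x b)))).
    assert (aux : forall x b, circ x (circ b x) = circ b x)
      by (intros; rewrite assoc, sb2c; reflexivity).
    rewrite <- !assoc, !aux in E. exact E. }
  assert (pR : forall x y, p x = p y -> circ x y = y /\ circ y x = x).
  { intros x y E. apply Hp in E. destruct E as [A1 A2]. split.
    - destruct A2 as [E2|[t E2]]; rewrite E2.
      + apply idem.
      + rewrite assoc, idem. reflexivity.
    - destruct A1 as [E2|[t E2]]; rewrite E2.
      + apply idem.
      + rewrite assoc, idem. reflexivity. }
  assert (Rp : forall x y, circ x y = y -> circ y x = x -> p x = p y).
  { intros x y E1 E2. apply Hp. split; right; eauto. }
  assert (C1 : forall x y y', p y = p y' -> circ y x = circ y' x).
  { intros x y y' E. destruct (pR _ _ E) as [E1 E2].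
    rewrite <- E2 at 1. rewrite <- assoc, RN, assoc, E1. reflexivity. }
  assert (LE : forall x w, mB (p x) (p w) = p x <-> circ w x = x).
  { intros x w. rewrite HmB. split.
    - intros E. destruct (pR _ _ E) as [E2 _]. rewrite sb2c in E2. exact E2.
    - intros E. apply Rp.
      + rewrite sb2c. exact E.
      + rewrite assoc, idem. reflexivity. }
  assert (surj : forall b, exists x, p x = b) by (intros b; exists (s b); auto).
  assert (trans : forall x w v, circ w x = x -> circ v w = w -> circ v x = x).
  { intros x w v E1 E2. rewrite <- E1, assoc, E2. reflexivity. }
  assert (DN : forall u t, down circ u (circ t u)).
  { intros u t. exists t. rewrite sb2c. reflexivity. }
  assert (Dinj : forall u y y', down circ u y -> down circ u y' -> p y = p y' -> y = y').
  { intros u y y' [t Ht] [t' Ht'] E. rewrite sb2c in Ht, Ht'.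
    assert (y = circ y u) by (rewrite Ht, <- assoc, idem; reflexivity).
    assert (y' = circ y' u) by (rewrite Ht', <- assoc, idem; reflexivity).
    rewrite H, H0. apply C1. exact E. }
  assert (Dp : forall x u, circ u x = x -> p (circ x u) = p x).
  { intros x u E. rewrite <- HmB. apply LE. exact E. }
  assert (ub1 : forall x y, circ (bullet x y) x = x).
  { intros x y. apply LE. rewrite HmB. f_equal. apply sb1c. }
  assert (ub2 : forall x y, circ (bullet x y) y = y).
  { intros x y. apply sb1c. }
  assert (mBc : forall x y, p (circ x y) = p (circ y x)).
  { intros x y. apply Rp.
    - rewrite <- assoc, (assoc y y x), idem, assoc, sb2c. reflexivity.
    - rewrite <- assoc, (assoc x x y), idem, assoc, sb2c. reflexivity. }
  assert (Part3 : forall x y, psh_le mB p (fun x b => circ (s b) x) x y <-> nat_le circ x y).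
  { intros x y. unfold psh_le, nat_le. cbv beta. split.
    - intros [L E]. rewrite E. rewrite <- assoc, idem. reflexivity.
    - intros E. split.
      + apply LE. transitivity (circ y (circ x y)); [rewrite <- E; reflexivity|].
        rewrite assoc, sb2c. symmetry; exact E.
      + set (t := s (p x)). destruct (pR t x (Hs _)) as [T1 T2].
        symmetry. rewrite <- T2. rewrite <- assoc, RN, <- E, T1. reflexivity. }
  split; [intros x y y' _ E; apply C1; exact E|].
  split; [|exact Part3].
  split.
  {
    split; [exact I|].
    split; [intros; split; exact I|].
    split.
    { intros a b c _ _ _. destruct (surj a) as [x <-]; destruct (surj b) as [y <-];
      destruct (surj c) as [z <-]. rewrite !HmB. rewrite assoc. reflexivity. }
    split.
    { intros a b c _ _ _. destruct (surj a) as [x <-]; destruct (surj b) as [y <-];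
      destruct (surj c) as [z <-]. rewrite !HjB. rewrite bassoc. reflexivity. }
    split.
    { intros a b _ _. destruct (surj a) as [x <-]; destruct (surj b) as [y <-].
      rewrite !HmB. apply mBc. }
    split.
    { intros a b _ _. destruct (surj a) as [x <-]; destruct (surj b) as [y <-].
      set (u := bullet x y).
      assert (Hx : p (circ x u) = p x) by (apply Dp, ub1).
      assert (Hy : p (circ y u) = p y) by (apply Dp, ub2).
      rewrite <- Hx, <- Hy, !HjB. f_equal.
      destruct (sb5 u) as [[Z [Cl [Ma [Ja [Mc [Jc _]]]]]] _].
      apply Jc; apply DN. }
    split.
    { intros a b _ _. destruct (surj a) as [x <-]; destruct (surj b) as [y <-].
      rewrite HjB, HmB. f_equal. apply sb1c. }
    split.
    { intros a b _ _. destruct (surj a) as [x <-]; destruct (surj b) as [y <-].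
      rewrite HmB, HjB. f_equal. apply sb1b. }
    split.
    { intros a b c _ _ _. destruct (surj a) as [x <-]; destruct (surj b) as [y <-];
      destruct (surj c) as [z <-].
      set (u := bullet x (bullet y z)).
      assert (Hx : p (circ x u) = p x) by (apply Dp, ub1).
      assert (Hy : p (circ y u) = p y)
        by (apply Dp; exact (trans y (bullet y z) u (ub1 y z) (ub2 x (bullet y z)))).
      assert (Hz' : p (circ z u) = p z)
        by (apply Dp; exact (trans z (bullet y z) u (ub2 y z) (ub2 x (bullet y z)))).
      rewrite <- Hx, <- Hy, <- Hz'. repeat rewrite ?HmB, ?HjB. f_equal.
      destruct (sb5 u) as [[Z [Cl [Ma [Ja [Mc [Jc [A1 [A2 [Dis _]]]]]]]]] _].
      apply Dis; apply DN. }
    split.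
    { intros a _. destruct (surj a) as [x <-]. rewrite Hz, HmB. f_equal. apply sb4. }
    { intros a m b _ _ _ L1 L2. destruct (surj a) as [xa <-]; destruct (surj m) as [xm <-];
      destruct (surj b) as [xb <-]. unfold le_of in L1, L2.
      apply LE in L1. apply LE in L2.
      set (u := xb).
      assert (Hxm : p (circ xm u) = p xm) by (apply Dp; exact L2).
      assert (Hxa : p (circ xa u) = p xa) by (apply Dp; exact (trans _ _ _ L1 L2)).
      destruct (sb5 u) as [[Z [Cl [Ma [Ja [Mc [Jc [A1 [A2 [Dis [Mz RC]]]]]]]]]] _].
      set (a' := circ xa u). set (m' := circ xm u).
      assert (Du : down circ u u) by (pose proof (DN u u) as D; rewrite idem in D; exact D).
      assert (Dam : down circ u (circ a' m')) by (unfold a', m'; rewrite assoc; apply DN).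
      assert (le1 : le_of circ a' m').
      { unfold le_of. apply (Dinj u); [exact Dam| apply DN|].
        rewrite <- HmB. unfold a', m'. rewrite Hxa, Hxm. apply LE. exact L1. }
      assert (le2 : le_of circ m' u).
      { unfold le_of, m'. rewrite <- assoc, idem. reflexivity. }
      destruct (RC a' m' u (DN _ _) (DN _ _) Du le1 le2) as [y [Dy [E1 E2]]].
      exists (p y). split; [exact I|]. split.
      - rewrite <- Hxm. fold m'. rewrite HmB, E1. exact Hxa.
      - rewrite <- Hxm. fold m'. rewrite HjB, E2. reflexivity. } }
  split.
  { split; [|split].
    - intros x f L. cbv beta. destruct (surj f) as [y <-].
      rewrite <- HmB, Hs. exact L.
    - intros x. cbv beta. rewrite (C1 x (s (p x)) x (Hs _)), idem. reflexivity.
    - intros x f g L1 L2. cbv beta. rewrite assoc. apply C1.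
      rewrite <- HmB, !Hs. exact L2. }
  split; [intros e; exists (s e); apply Hs|].
  split.
  { exists zero. split.
    - intros x. apply Part3. unfold nat_le. symmetry; apply sb4.
    - intros x E. rewrite Hz in E. destruct (pR _ _ E) as [_ E2].
      rewrite (proj1 (sb4 x)) in E2. auto. }
  intros x y [m [[Gm1 [Gm2 _]] Pm]].
  apply Part3 in Gm1. apply Part3 in Gm2. unfold nat_le in Gm1, Gm2.
  rewrite HmB in Pm.
  assert (Hc : circ x y = circ y x).
  { assert (M1 : m = circ y x).
    { rewrite Gm1. rewrite (C1 x m (circ y x)).
      - rewrite <- assoc, idem. reflexivity.
      - rewrite Pm. apply mBc. }
    assert (M2 : m = circ x y).
    { rewrite Gm2. rewrite (C1 y m (circ x y)).
      - rewrite <- assoc, idem. reflexivity.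
      - exact Pm. }
    congruence. }
  exists (bullet x y). split; [|split].
  - apply Part3. unfold nat_le. symmetry. apply sb1c.
  - apply Part3. unfold nat_le. rewrite (proj2 (sb3 x y) Hc). symmetry. apply sb1c.
  - intros w W1 W2. apply Part3 in W1. apply Part3 in W2. apply Part3.
    unfold nat_le in *. destruct (sb5 w) as [[_ [Cl _]] _].
    assert (D1 : down circ w x) by (exists x; rewrite sb2c; exact W1).
    assert (D2 : down circ w y) by (exists y; rewrite sb2c; exact W2).
    destruct (Cl x y D1 D2) as [_ [t Ht]].
    rewrite Ht, <- (assoc (circ w t) w w), idem. reflexivity.
Qed.
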